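(* Let $a\in\mathbb{N}$ and $b\neq d\in\mathbb{Z}$ with $a\mid\mathrm{lcm}(b,d)$. Then $\omega(G_{a,b,a,d})=\infty$, i.e. $G_{a,b,a,d}$ contains cliques of every finite size.
   Context: $\mathbb{N}=\{1,2,\dots\}$; convention $\mathrm{lcm}(b,0)=0$. For $a,c\in\mathbb{N}$, $b,d\in\mathbb{Z}$, $R_{a,b,c,d} := \left\{ \frac{an+b}{cn+d} : n \in \mathbb{N} \right\} \cap (\mathbb{Q}_{>0}\setminus\{1\})$; $G_{a,b,c,d}$ is the graph with vertex set $\mathbb{N}$ and edge set $\{\{m,n\}: m/n\in R_{a,b,c,d}\}$. $\omega$ denotes clique number. *)

(* Defs.v *)
From mathcomp Require Import all_boot all_order all_algebra.
Set Implicit Arguments. Unset Strict Implicit. Unset Printing Implicit Defensive.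
Import Order.TTheory GRing.Theory Num.Theory.
Local Open Scope ring_scope.

(* Division by zero in rat yields 0, which is excluded by q > 0, so
   indices n with c n + d = 0 contribute nothing (the quotient is undefined). *)
Definition inR (a : nat) (b : int) (c : nat) (d : int) (q : rat) : Prop :=
  exists n : nat, (0 < n)%N /\
    (c%:Z * n%:Z + d != 0) /\
    q = (a%:Z * n%:Z + b)%:~R / (c%:Z * n%:Z + d)%:~R /\
    0 < q /\ q != 1.

Definition adjG (a : nat) (b : int) (c : nat) (d : int) (m n : nat) : Prop :=
  inR a b c d (m%:Q / n%:Q) \/ inR a b c d (n%:Q / m%:Q).

Definition is_cliqueG (a : nat) (b : int) (c : nat) (d : int) (S : seq nat) : Prop :=
  uniq S /\ (forall m, m \in S -> (0 < m)%N) /\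
  (forall m n, m \in S -> n \in S -> m != n -> adjG a b c d m n).

(* Main.v *)
Require Import Defs.
From mathcomp Require Import all_boot all_order all_algebra ring zify.
Import Order.TTheory GRing.Theory Num.Theory.


Lemma split_a (a p q : nat) : 0 < a -> a %| lcmn p q ->
  exists U V, [/\ coprime U V, U * V = a, U %| q & V %| p].
Proof.
move=> a0 hl.
have [->|q0] := posnP q.
  by exists a, 1; rewrite coprimen1 muln1 dvdn0 dvd1n.
have [p0|p0] := posnP p.
  by exists 1, a; rewrite coprime1n mul1n dvd1n p0 dvdn0.
pose pi := [pred l : nat | a`_l %| q].
exists a`_pi, a`_pi^'; split.
- exact: coprime_partC.
- exact: partnC.
- apply/dvdn_partP; first exact: part_gt0.
  move=> l; rewrite pi_of_part // inE => /andP[_ lpi].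
  by rewrite partn_part // => x; rewrite inE => /eqP ->.
- apply/dvdn_partP; first exact: part_gt0.
  move=> l; rewrite pi_of_part // inE => /andP[la lpi].
  rewrite partn_part; last by move=> x; rewrite inE => /eqP ->.
  have lp : prime l by move: la; rewrite mem_primes => /andP[].
  have nq : ~~ (logn l a <= logn l q).
    by move: lpi; rewrite !inE /= p_part pfactor_dvdn.
  have : a`_l %| lcmn p q by apply: dvdn_trans hl; apply: dvdn_part.
  rewrite p_part.
  rewrite !pfactor_dvdn // ?lcmn_gt0 ?p0 ?q0 // logn_lcm // leq_max.
  by case/orP=> // H; rewrite H in nq.
Qed.


Lemma dvd_prod_seq (F : nat -> nat) (s : seq nat) x :
  x \in s -> F x %| \prod_(y <- s) F y.
Proof.
elim: s => // y s IH; rewrite inE big_cons => /orP[/eqP ->|/IH H].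
  exact: dvdn_mulr.
exact: dvdn_mull.
Qed.

Lemma prod_seq_gt0 (F : nat -> nat) (s : seq nat) :
  (forall x, x \in s -> 0 < F x) -> 0 < \prod_(y <- s) F y.
Proof.
elim: s => [|y s IH] H; first by rewrite big_nil.
rewrite big_cons muln_gt0 H ?mem_head // IH // => x xs.
by apply: H; rewrite inE xs orbT.
Qed.

Lemma coprime_prod_seq (F : nat -> nat) (s : seq nat) n :
  (forall x, x \in s -> coprime (F x) n) -> coprime (\prod_(y <- s) F y) n.
Proof.
elim: s => [|y s IH] H; first by rewrite big_nil coprime1n.
rewrite big_cons coprimeMl H ?mem_head // IH // => x xs.
by apply: H; rewrite inE xs orbT.
Qed.

Lemma inv_exists (A M C : nat) : 0 < A -> 0 < M -> coprime A M ->
  exists c, C < c /\ M %| A * c + 1.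
Proof.
move=> A0 M0 co.
pose x0 := chinese A M 0 M.-1.
have h1 := chinese_modl co 0 M.-1.
have h2 := chinese_modr co 0 M.-1.
rewrite -/x0 mod0n in h1 h2.
have /dvdnP[c0 hc0] : A %| x0 by rewrite /dvdn h1.
have hM : M %| x0 + 1 by rewrite /dvdn -modnDml h2 modnDml addn1 prednK // modnn.
exists (c0 + M * C.+1); split.
  by rewrite (leq_trans _ (leq_addl _ _)) // leq_pmull.
rewrite mulnDr addnAC -(mulnC c0) -hc0; apply: dvdn_add => //; rewrite mulnCA; exact: dvdn_mulr.
Qed.

Definition good (U V C x y : nat) : Prop :=
  exists r, [/\ x = (r * (y - x))%N, (U %| r)%N, (V %| r.+1)%N & (C <= r)%N].
Definition Inv (U V C : nat) (S : seq nat) : Prop :=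
  [/\ uniq S, forall x, x \in S -> 0 < x /\ V %| x &
      forall x y, x \in S -> y \in S -> x < y -> good U V C x y].

Lemma step U V C S : 0 < U -> 0 < V -> coprime U V -> Inv U V C S ->
  exists S', size S' = (size S).+1 /\ Inv U V C S'.
Proof.
move=> U0 V0 cUV [uS posS gS].
pose Pi := \prod_(s <- S) s.
have Pi0 : 0 < Pi by apply: prod_seq_gt0 => x /posS [].
pose pi := \pi(V).
pose Q := U * Pi`_pi^'.
have Q0 : 0 < Q by rewrite muln_gt0 U0 part_gt0.
have cQV : coprime Q V.
  rewrite coprimeMl cUV /=; have := coprime_partC pi V Pi.
  by rewrite part_pnat_id ?pnat_pi // coprime_sym.
pose P := \prod_(s <- S) (s + Q).
have P0 : 0 < P by apply: prod_seq_gt0 => x _; rewrite addn_gt0 Q0 orbT.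
have cPV : coprime P V.
  apply: coprime_prod_seq => s /posS [_ Vs].
  by rewrite -(divnK Vs) /coprime gcdnC gcdnMDl gcdnC.
pose M := V * Pi`_pi.
have M0 : 0 < M by rewrite muln_gt0 V0 part_gt0.
have cAM : coprime (U * P) M.
  rewrite coprimeMl !coprimeMr cUV cPV /=.
  apply/andP; split; rewrite coprime_sym; apply: (pnat_coprime (part_pnat pi Pi));
    by rewrite -coprime_pi' // coprime_sym.
have A0 : 0 < U * P by rewrite muln_gt0 U0 P0.
have [c [Cc hc]] := @inv_exists (U * P) M C A0 M0 cAM.
pose alpha := U * P * c.
have al0 : 0 < alpha by rewrite /alpha muln_gt0 A0 (leq_ltn_trans (leq0n C) Cc).
pose z := alpha * Q.
pose L := alpha.+1 * Q.
have hLz : L = z + Q by rewrite /L /z mulSn addnC.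
have hMQ : U * V * Pi = M * Q.
  by rewrite /M /Q -{1}(partnC pi Pi0); ring.
have hL : U * V * Pi %| L by rewrite hMQ /L dvdn_mul // -addn1.
have VL : V %| L by apply: dvdn_trans hL; rewrite -mulnA dvdn_mull // dvdn_mulr.
pose T := z :: [seq s + L | s <- S].
have goodT : forall t1 t2, t1 \in T -> t2 \in T -> t1 < t2 -> good U V C t1 t2.
  move=> t1 t2; rewrite !inE => /orP[/eqP->|/mapP[s1 s1S ->]] /orP[/eqP->|/mapP[s2 s2S ->]].
  - by rewrite ltnn.
  - move=> _; have sQ : s2 + Q %| P by exact: (dvd_prod_seq (fun s => s + Q)).
    have [k hk] := dvdnP sQ.
    have Vs := (posS _ s2S).2.
    pose w := U * c * Q * k.
    have hw : z = w * (s2 + Q) by rewrite /z /alpha /w hk; ring.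
    have hd : s2 + L - z = s2 + Q by rewrite hLz addnCA addKn.
    exists w; split.
    + by rewrite hd.
    + by rewrite /w -!mulnA dvdn_mulr.
    + have H : V %| w.+1 * Q + w * s2.
        have -> : w.+1 * Q + w * s2 = L by rewrite hLz hw -addn1; ring.
        exact: VL.
      rewrite dvdn_addl in H; last by apply: dvdn_mull.
      have cVQ : coprime V Q by rewrite coprime_sym.
      by rewrite -(Gauss_dvdl _ cVQ).
    + have k0 : 0 < k by move: P0; rewrite hk muln_gt0 => /andP[].
      rewrite /w; move: Q0; generalize Q => q q0.
      apply: leq_trans (ltnW Cc) _.
      rewrite (mulnC U) -!mulnA leq_pmulr //.
      by rewrite !muln_gt0 U0 q0 k0.
  - by rewrite hLz addnCA ltnNge leq_addr.
  - move=> lt12; have lt' : s1 < s2 by rewrite ltn_add2r in lt12.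
    have [r [hr Ur Vr Cr]] := gS _ _ s1S s2S lt'.
    have hd : s1 %| Pi by exact: (dvd_prod_seq id).
    have hdd : s2 - s1 %| Pi by apply: dvdn_trans hd; rewrite {2}hr; exact: dvdn_mull.
    have [j hj] : exists j, L = U * V * (s2 - s1) * j.
      have : U * V * (s2 - s1) %| L.
        by apply: dvdn_trans hL; rewrite dvdn_mul.
      by move=> /dvdnP[j hj]; exists j; rewrite hj mulnC.
    exists (r + U * V * j); split.
    + rewrite subnDr; move: (s2 - s1) hr hj => dl hr hj.
      by rewrite {1}hr hj; ring.
    + by rewrite dvdn_add // -mulnA dvdn_mulr.
    + by rewrite -addSn dvdn_add // mulnC mulnA dvdn_mull.
    + exact: leq_trans Cr (leq_addr _ _).
have zlt : forall s, z < s + L by move=> s; rewrite hLz addnCA -{1}(addn0 z) ltn_add2l addn_gt0 Q0 orbT.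
have injV : injective (muln V) by move=> x y /eqP; rewrite eqn_pmul2l // => /eqP.
exists [seq V * t | t <- T]; split.
  by rewrite size_map /= size_map.
split.
- rewrite map_inj_uniq // /= map_inj_uniq ?uS ?andbT; last exact: addIn.
  by apply/mapP => -[s _ hs]; move: (zlt s); rewrite -hs ltnn.
- move=> x /mapP[t tT ->]; split; last exact: dvdn_mulr.
  rewrite muln_gt0 V0; move: tT; rewrite inE => /orP[/eqP->|/mapP[s sS ->]].
    by rewrite /z muln_gt0 al0 Q0.
  by rewrite addn_gt0 (posS _ sS).1.
- move=> x y /mapP[t1 t1T ->] /mapP[t2 t2T ->]; rewrite ltn_pmul2l // => lt.
  have [r [hr Ur Vr Cr]] := goodT _ _ t1T t2T lt.
  by exists r; split => //; rewrite -mulnBr {1}hr mulnCA.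
Qed.

Lemma core U V C k : 0 < U -> 0 < V -> coprime U V ->
  exists S, size S = k /\ Inv U V C S.
Proof.
move=> U0 V0 cUV; elim: k => [|k [S [hs iS]]].
  by exists [::]; split => //; split => //.
have [S' [hs' iS']] := @step U V C S U0 V0 cUV iS.
by exists S'; rewrite hs' hs.
Qed.

Local Open Scope ring_scope.

Lemma edge_core (a U V r : nat) (p q : int) : (U * V = a)%N ->
  (U %| `|q|)%N -> (V %| `|p|)%N -> (U %| r)%N -> (V %| r.+1)%N ->
  exists T : int, a%:Z * T = r%:Z * p - (r%:Z + 1) * q.
Proof.
move=> hUV hq hp hr hr1.
have /dvdzP[q1 ->] : (U%:Z %| q)%Z by [].
have /dvdzP[p1 ->] : (V%:Z %| p)%Z by [].
have /dvdnP[r1 hr1'] := hr.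
have /dvdnP[r2 hr2'] := hr1.
exists (r1%:Z * p1 - r2%:Z * q1).
have -> : r%:Z = r1%:Z * U%:Z by rewrite hr1' PoszM.
have -> : r1%:Z * U%:Z + 1 = r2%:Z * V%:Z by rewrite -!PoszM -hr2' -hr1'; (timeout 10 lia).
rewrite -hUV PoszM; ring.
Qed.

Lemma inR_of (a : nat) (b d : int) (u v : nat) (T : int) : 0 < T ->
  (0 < u)%N -> (0 < v)%N -> u != v -> a%:Z * T + d != 0 ->
  (a%:Z * T + b) * v%:Z = (a%:Z * T + d) * u%:Z ->
  inR a b a d (u%:Q / v%:Q).
Proof.
move=> T0 u0 v0 uv nz heq.
have hT : (`|T|%N)%:Z = T by rewrite gez0_abs // ltW.
have v0' : v%:Q != 0 by rewrite intr_eq0 -lt0n.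
have d0' : (a%:Z * T + d)%:~R != 0 :> rat by rewrite intr_eq0.
rewrite /inR; exists `|T|%N; rewrite hT; split; first by rewrite -ltz_nat hT.
split => //; split; last split.
- apply/eqP; rewrite eqr_div //.
  by rewrite -!intrM heq mulrC.
- by rewrite divr_gt0 // ltr0z.
- apply/negP => /eqP h.
  have : u%:Q = v%:Q by rewrite -(divfK v0' u%:Q) h mul1r.
  by move/intr_inj => [] /eqP; rewrite (negbTE uv).
Qed.

Lemma adj1 (a : nat) (b d : int) U V C x y : (0 < a)%N -> d < b ->
  (U * V = a)%N -> (U %| `|d|)%N -> (V %| `|b|)%N -> (a + `|d| < C)%N ->
  good U V C x y -> (0 < x)%N -> (x < y)%N -> inR a b a d (y%:Q / x%:Q).
Proof.
move=> a0 db hUV hd hb hC [r [hr Ur Vr Cr]] x0 xy.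
have [T hT] := @edge_core a U V r b d hUV hd hb Ur Vr.
have hy : y = (x + (y - x))%N by rewrite subnKC // ltnW.
move: (y - x)%N hr hy => dl hx hy.
have aTd : a%:Z * T + d = r%:Z * (b - d) by rewrite hT; ring.
have aTb : a%:Z * T + b = (r%:Z + 1) * (b - d) by rewrite hT; ring.
have e1 : 1 <= b - d by (timeout 10 lia).
have rC : (a + `|d| < r)%N by apply: leq_trans hC Cr.
have T0 : 0 < T.
  have hT' : a%:Z * T = r%:Z * (b - d) - d by rewrite hT; ring.
  have h1 : r%:Z <= r%:Z * (b - d) by apply: ler_peMr.
  have h2 : d <= (`|d|%N)%:Z by rewrite abszE ler_norm.
  have h3 : (a%:Z + (`|d|%N)%:Z < r%:Z) by rewrite -PoszD ltz_nat.
  have : 0 < a%:Z * T.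
    rewrite hT'; move: (r%:Z * (b - d)) (`|d|%N%:Z) h1 h2 h3 => X D h1 h2 h3.
    have a0z : 0 <= a%:Z by [].
    clear -h1 h2 h3 a0z; lia.
  by rewrite pmulr_rgt0 // ltz_nat.
apply: (@inR_of a b d y x T T0) => //.
- by rewrite hy addn_gt0 x0.
- by rewrite gtn_eqF.
- rewrite aTd mulf_neq0 //; last by (timeout 10 lia).
  by rewrite eqz_nat -lt0n (leq_ltn_trans (leq0n _) rC).
- rewrite aTb aTd hy hx PoszD !PoszM; ring.
Qed.

Lemma adj2 (a : nat) (b d : int) U V C x y : (0 < a)%N -> b < d ->
  (U * V = a)%N -> (U %| `|b|)%N -> (V %| `|d|)%N -> (a + `|b| < C)%N ->
  good U V C x y -> (0 < x)%N -> (x < y)%N -> inR a b a d (x%:Q / y%:Q).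
Proof.
move=> a0 db hUV hd hb hC [r [hr Ur Vr Cr]] x0 xy.
have [T hT] := @edge_core a U V r d b hUV hd hb Ur Vr.
have hy : y = (x + (y - x))%N by rewrite subnKC // ltnW.
move: (y - x)%N hr hy => dl hx hy.
have aTb : a%:Z * T + b = r%:Z * (d - b) by rewrite hT; ring.
have aTd : a%:Z * T + d = (r%:Z + 1) * (d - b) by rewrite hT; ring.
have e1 : 1 <= d - b by (timeout 10 lia).
have rC : (a + `|b| < r)%N by apply: leq_trans hC Cr.
have T0 : 0 < T.
  have hT' : a%:Z * T = r%:Z * (d - b) - b by rewrite hT; ring.
  have h1 : r%:Z <= r%:Z * (d - b) by apply: ler_peMr.
  have h2 : b <= (`|b|%N)%:Z by rewrite abszE ler_norm.
  have h3 : (a%:Z + (`|b|%N)%:Z < r%:Z) by rewrite -PoszD ltz_nat.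
  have : 0 < a%:Z * T.
    rewrite hT'; move: (r%:Z * (d - b)) (`|b|%N%:Z) h1 h2 h3 => X D h1 h2 h3.
    have a0z : 0 <= a%:Z by [].
    clear -h1 h2 h3 a0z; lia.
  by rewrite pmulr_rgt0 // ltz_nat.
apply: (@inR_of a b d x y T T0) => //.
- by rewrite hy addn_gt0 x0.
- by rewrite ltn_eqF.
- by rewrite aTd mulf_neq0 //; (timeout 10 lia).
- rewrite aTb aTd hy hx PoszD !PoszM; ring.
Qed.

Theorem theorem3p2 (a : nat) (b d : int) :
  (0 < a)%N -> b != d -> (a%:Z %| lcmz b d)%Z ->
  forall k : nat, exists S : seq nat, size S = k /\ is_cliqueG a b a d S.
Proof.
move=> a0 bd hl k.
have hl' : (a %| lcmn `|b| `|d|)%N by exact: hl.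
have posUV : forall U V, (U * V)%N = a -> (0 < U)%N /\ (0 < V)%N.
  by move=> U V h; move: a0; rewrite -h muln_gt0 => /andP[].
case/orP: (lt_total bd) => [bltd | dltb].
- have hl2 : (a %| lcmn `|d| `|b|)%N by rewrite lcmnC.
  have [U [V [cUV hUV hU hV]]] := @split_a a _ _ a0 hl2.
  have [U0 V0] := posUV U V hUV.
  have [S [hs [uS posS gS]]] := @core U V (a + `|b|).+1 k U0 V0 cUV.
  exists S; split => //; split => //; split; first by move=> m /posS[].
  move=> m n mS nS mn; case: (ltngtP m n) => [lt|gt|eq]; last by rewrite eq eqxx in mn.
  + left; apply: (@adj2 a b d U V _ _ _ a0 bltd hUV hU hV (leqnn _) (gS _ _ mS nS lt)) => //.
    exact: (posS _ mS).1.
  + right; apply: (@adj2 a b d U V _ _ _ a0 bltd hUV hU hV (leqnn _) (gS _ _ nS mS gt)) => //.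
    exact: (posS _ nS).1.
- have [U [V [cUV hUV hU hV]]] := @split_a a _ _ a0 hl'.
  have [U0 V0] := posUV U V hUV.
  have [S [hs [uS posS gS]]] := @core U V (a + `|d|).+1 k U0 V0 cUV.
  exists S; split => //; split => //; split; first by move=> m /posS[].
  move=> m n mS nS mn; case: (ltngtP m n) => [lt|gt|eq]; last by rewrite eq eqxx in mn.
  + right; apply: (@adj1 a b d U V _ _ _ a0 dltb hUV hU hV (leqnn _) (gS _ _ mS nS lt)) => //.
    exact: (posS _ mS).1.
  + left; apply: (@adj1 a b d U V _ _ _ a0 dltb hUV hU hV (leqnn _) (gS _ _ nS mS gt)) => //.
    exact: (posS _ nS).1.
Qed.
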